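(* Let $X$ be a finite topological space and $A\subseteq X$. Then $\Psi(a,A)=\Psi(a,\overline{A})$ for all $a\in X$, where $\overline{A}$ is the closure of $A$ in $X$.
   Context: For a finite topological space $X$ and $x\in X$, $U_x$ denotes the minimal open set containing $x$. A nested sequence of open sets around $x$ is a finite sequence $U_0\subsetneq U_1\subsetneq\cdots\subsetneq U_m=X$ of open sets with $U_0=U_x$ such that for each $j$ there is no open set $V$ with $U_j\subsetneq V\subsetneq U_{j+1}$. The furtherness function $\Psi:X\times X\to\{0,1,\dots,|X|-1\}$ is defined by: $\Psi(x,y)$ is the smallest integer $k\ge 0$ such that there exists a nested sequence $(U_j)_{j\ge0}$ of open sets around $x$ with $y\in U_k$. For $a\in X$ and $B\subseteq X$, $\Psi(a,B)=\min_{b\in B}\Psi(a,b)$, with $\Psi(a,\emptyset)=\infty$. *)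

(* Defs.v *)
From mathcomp Require Import all_boot.
From Stdlib Require Import ClassicalEpsilon.
Set Implicit Arguments. Unset Strict Implicit. Unset Printing Implicit Defensive.

Section FiniteTopology.
Variable T : finType.
Implicit Types (O : {set {set T}}) (A B U V W : {set T}) (x y a : T).

(* On a finite carrier, closure under binary unions/intersections is
   equivalent to closure under arbitrary unions / finite intersections. *)
Definition is_topology O : Prop :=
  [/\ set0 \in O, setT \in O,
      (forall U V, U \in O -> V \in O -> U :|: V \in O) &
      (forall U V, U \in O -> V \in O -> U :&: V \in O)].

Definition Umin O x : {set T} := \bigcap_(U in O | x \in U) U.

Definition top_closure O A : {set T} := \bigcap_(C | (~: C \in O) && (A \subset C)) C.

Definition open_cover O U V : bool :=
  (U \proper V) && [forall W : {set T}, (W \in O) ==> ~~ ((U \proper W) && (W \proper V))].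

Definition nested_seq O x (U0 : {set T}) (rest : seq {set T}) : bool :=
  [&& U0 == Umin O x, all (fun U => U \in O) (U0 :: rest),
      path (open_cover O) U0 rest & last U0 rest == setT].

Definition reach_at O x y (k : nat) : Prop :=
  exists (U0 : {set T}) (rest : seq {set T}),
    nested_seq O x U0 rest /\ k < size (U0 :: rest) /\ y \in nth set0 (U0 :: rest) k.

Definition reach_atb O x y (k : nat) : bool :=
  if excluded_middle_informative (reach_at O x y k) then true else false.

(* furtherness function Psi(x,y): smallest such k (default 0 if none,
   which never happens in a finite topological space) *)
Definition Psi O x y : nat :=
  match excluded_middle_informative (exists k, reach_atb O x y k) with
  | left h => ex_minn h
  | right _ => 0
  end.

(* Psi(a,B) = min_{b in B} Psi(a,b); None encodes infinity (B empty) *)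
Definition PsiSet O a B : option nat :=
  match [pick b in B] with
  | None => None
  | Some b0 => Some (Psi O a [arg min_(b < b0 in B) Psi O a b])
  end.

End FiniteTopology.

(* Main.v *)
Require Import Defs.
From mathcomp Require Import all_boot.
From mathcomp Require Import zify.
From Stdlib Require Import ClassicalEpsilon.
Set Implicit Arguments. Unset Strict Implicit. Unset Printing Implicit Defensive.

Section Aux.
Variables (T : finType) (O : {set {set T}}).
Hypothesis hO : is_topology O.

Lemma Umin_open x : Umin O x \in O.
Proof.
case: hO => _ HT _ HI; rewrite /Umin.
apply: (big_ind (fun U => U \in O)) => //.
by move=> U /andP[].
Qed.

Lemma chain_ex n : forall U, U \in O -> #|~: U| <= n ->
  exists rest, [&& all (fun V => V \in O) rest,
                  path (open_cover O) U rest & last U rest == setT].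
Proof.
elim: n => [|n IH] U HU Hn.
  exists [::]; rewrite /=; apply/eqP.
  have: ~: U == set0 by rewrite -cards_eq0; lia.
  by move/eqP => E; rewrite -(setCK U) E setC0.
case: (boolP (U == setT)) => [/eqP ->|nT].
  by exists [::]; rewrite /= eqxx.
have PT : (setT \in O) && (U \proper setT).
  case: hO => _ -> _ _ /=; rewrite properT //.
case: (@arg_minnP _ setT (fun V : {set T} => (V \in O) && (U \proper V)) (fun V : {set T} => #|V|) PT) => V /andP[VO UV] Vmin.
have [rest /and3P[r1 r2 r3]] : exists rest, [&& all (fun V => V \in O) rest,
                  path (open_cover O) V rest & last V rest == setT].
  apply: IH => //.
  have := proper_card UV; have := cardsC U; have := cardsC V; lia.
exists (V :: rest); rewrite /= VO r1 r2 r3 !andbT /open_cover UV /=.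
apply/forallP => W; apply/implyP => WO; apply/negP => /andP[UW WV].
have := Vmin W; rewrite WO UW => /(_ isT).
have := proper_card WV; lia.
Qed.

Lemma reach_ex x y : exists k, reach_at O x y k.
Proof.
have [rest /and3P[r1 r2 r3]] := @chain_ex #|~: Umin O x| (Umin O x) (Umin_open x) (leqnn _).
exists (size rest), (Umin O x), rest; split.
  by rewrite /nested_seq eqxx /= Umin_open r1 r2 r3.
split; first by [].
have := nth_last set0 (Umin O x :: rest); rewrite /= => ->.
by rewrite (eqP r3) inE.
Qed.

Lemma PsiP x y : reach_at O x y (Psi O x y) /\
  forall k, reach_at O x y k -> Psi O x y <= k.
Proof.
have rb k : reach_atb O x y k = true <-> reach_at O x y k.
  by rewrite /reach_atb; case: excluded_middle_informative.
rewrite /Psi; case: excluded_middle_informative => [h|nh].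
  case: ex_minnP => m /rb Hm Hmin; split => // k /rb; exact: Hmin.
exfalso; apply: nh; have [k Hk] := reach_ex x y; exists k; exact/rb.
Qed.

Lemma closure_sub (A : {set T}) : A \subset top_closure O A.
Proof.
apply/bigcapsP => C /andP[_ ->] //.
Qed.

Lemma closure_meet (A U : {set T}) b : U \in O -> b \in U -> b \in top_closure O A ->
  exists2 c, c \in A & c \in U.
Proof.
move=> UO bU bC.
case: (set_0Vmem (A :&: U)) => [E|[c]]; last by rewrite inE => /andP[]; exists c.
have: top_closure O A \subset ~: U.
  apply: bigcap_inf; rewrite setCK UO /=.
  apply/subsetP => z zA; rewrite inE; apply/negP => zU.
  by have := in_set0 z; rewrite -E inE zA zU.
by move/subsetP/(_ b bC); rewrite inE bU.
Qed.

Lemma closure0 : top_closure O set0 = set0.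
Proof.
apply/eqP; rewrite -subset0; apply: bigcap_inf.
by rewrite setC0 sub0set andbT; case: hO.
Qed.

End Aux.

Theorem mainTheorem17 (T : finType) (O : {set {set T}}) :
  is_topology O ->
  forall (A : {set T}) (a : T), PsiSet O a A = PsiSet O a (top_closure O A).
Proof.
move=> hO A a.
rewrite /PsiSet.
case: pickP => [b0 b0A|nA]; last first.
  have -> : A = set0 by apply/setP => z; rewrite inE nA.
  by rewrite closure0 //; case: pickP => // z; rewrite inE.
have b0C : b0 \in top_closure O A by apply: (subsetP (closure_sub O A)).
case: pickP => [b1 b1C|nC]; last by rewrite nC in b0C.
congr Some.
case: (arg_minnP (Psi O a) b0A) => c cA cmin.
case: (arg_minnP (Psi O a) b1C) => d dC dmin.
apply/eqP; rewrite eqn_leq; apply/andP; split; last first.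
  by apply: dmin; apply: (subsetP (closure_sub O A)).
have [[U0 [rest [Hn [Hk Hd]]]] _] := PsiP hO a d.
have UO : nth set0 (U0 :: rest) (Psi O a d) \in O.
  case/and4P: Hn => _ /allP Hall _ _; apply: Hall; exact: mem_nth.
have [e eA eU] := closure_meet UO Hd dC.
apply: leq_trans (cmin e eA) _.
have [_ Hmin] := PsiP hO a e.
apply: Hmin; exists U0, rest; split => //.
Qed.
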